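(* For the unit-range normalization, there is an absolute constant $C>0$ such that for every $n\ge1$ and every truthful-in-expectation mechanism $J$ on $n$ agents and $n$ items, $ar(J)\le C/\sqrt n$. (Explicitly, $ar(J)\le 16/\sqrt n$.)
   Context: Agents $N=\{1,\dots,n\}$, items $M=\{1,\dots,n\}$, outcomes are bijections $\mu$ ($O$ the set of outcomes). Unit-range valuation functions: injective $u_i:M\to\mathbb R$ with $\max_j u_i(j)=1$, $\min_j u_i(j)=0$; $V$ the set of these, $V^n$ the set of profiles. A (randomized) mechanism $J$ maps each profile to a distribution over $O$; $J(\mathbf u)_i$ is agent $i$'s random item. $J$ is truthful-in-expectation if for all $i$, $\mathbf u=(u_i,u_{-i})\in V^n$, $\tilde u_i\in V$: $\mathbb E[u_i(J(u_i,u_{-i})_i)]\ge\mathbb E[u_i(J(\tilde u_i,u_{-i})_i)]$. $ar(J)=\inf_{\mathbf u\in V^n}\mathbb E[\sum_i u_i(J(\mathbf u)_i)]/\max_{\mu\in O}\sum_i u_i(\mu_i)$. *)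

(* Defs.v *)
From Stdlib Require Import Reals.
From mathcomp Require Import all_boot all_fingroup.
Set Implicit Arguments. Unset Strict Implicit. Unset Printing Implicit Defensive.

Local Open Scope R_scope.

Definition valuation (n : nat) := 'I_n -> R.
Definition profile (n : nat) := 'I_n -> valuation n.
(* Outcomes: bijections agents -> items; (s i) is the item of agent i. *)
Definition outcome (n : nat) := {perm 'I_n}.

Definition unit_range (n : nat) (u : valuation n) : Prop :=
  injective u /\
  (exists j, u j = 1) /\ (exists j, u j = 0) /\
  (forall j, 0 <= u j <= 1).

Definition in_Vn (n : nat) (u : profile n) : Prop := forall i, unit_range (u i).

Definition mechanism (n : nat) := profile n -> outcome n -> R.

Definition sumR (n : nat) (f : outcome n -> R) : R :=
  \big[Rplus/0]_(s : outcome n) f s.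

Definition is_mechanism (n : nat) (J : mechanism n) : Prop :=
  forall u : profile n, in_Vn u ->
    (forall s, 0 <= J u s) /\ sumR (fun s => J u s) = 1.

Definition update (n : nat) (u : profile n) (i : 'I_n) (w : valuation n)
  : profile n := fun k => if k == i then w else u k.

(* Expected value to (true valuation) ui of agent i's random item under J v. *)
Definition exp_util (n : nat) (J : mechanism n) (v : profile n) (i : 'I_n)
  (ui : valuation n) : R :=
  sumR (fun s => J v s * ui (s i)).

Definition truthful_in_expectation (n : nat) (J : mechanism n) : Prop :=
  forall (i : 'I_n) (u : profile n) (w : valuation n),
    in_Vn u -> unit_range w ->
    exp_util J (update u i w) i (u i) <= exp_util J u i (u i).

Definition welfare (n : nat) (u : profile n) (s : outcome n) : R :=
  \big[Rplus/0]_(i : 'I_n) u i (s i).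

Definition exp_welfare (n : nat) (J : mechanism n) (u : profile n) : R :=
  sumR (fun s => J u s * welfare u s).

(* max over outcomes (welfare values are nonnegative on V^n, and outcomes
   exist, so folding Rmax from 0 gives the maximum). *)
Definition opt_welfare (n : nat) (u : profile n) : R :=
  \big[Rmax/0]_(s : outcome n) welfare u s.

Definition ratio (n : nat) (J : mechanism n) (u : profile n) : R :=
  exp_welfare J u / opt_welfare u.

(* ar(J) <= c, with ar(J) = inf_{u in V^n} ratio J u, written out:
   for every eps > 0 some profile in V^n has ratio < c + eps. *)
Definition ar_le (n : nat) (J : mechanism n) (c : R) : Prop :=
  forall eps : R, 0 < eps -> exists u : profile n, in_Vn u /\ ratio J u < c + eps.

(* Main.v *)
Require Import Defs.
From HB Require Import structures.
From Stdlib Require Import Reals Lra Lia Psatz FunctionalExtensionality Classical.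
From mathcomp Require Import all_boot all_fingroup.
From mathcomp Require Import zify.
Set Implicit Arguments. Unset Strict Implicit. Unset Printing Implicit Defensive.
Local Open Scope R_scope.

Lemma Rplus_assoc' : associative Rplus. Proof. by move=> *; rewrite Rplus_assoc. Qed.
HB.instance Definition _ := Monoid.isComLaw.Build R 0 Rplus Rplus_assoc' Rplus_comm Rplus_0_l.
Lemma Rmax_assoc' : associative Rmax. Proof. by move=> *; rewrite Rmax_assoc. Qed.
HB.instance Definition _ := SemiGroup.isComLaw.Build R Rmax Rmax_assoc' Rmax_comm.

Section Sums.
Variable T : finType.

Lemma sum_le (P : pred T) (F G : T -> R) : (forall i, P i -> F i <= G i) ->
  \big[Rplus/0]_(i | P i) F i <= \big[Rplus/0]_(i | P i) G i.
Proof. move=> h; elim/big_rec2: _ => [|i x y Pi hxy]; [lra|]. have := h i Pi; lra. Qed.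

Lemma sum_ge0 (P : pred T) (F : T -> R) : (forall i, P i -> 0 <= F i) ->
  0 <= \big[Rplus/0]_(i | P i) F i.
Proof. move=> h; elim/big_rec: _ => [|i x Pi hx]; [lra|]. have := h i Pi; lra. Qed.

Lemma sum_scal (P : pred T) (c : R) (F : T -> R) :
  \big[Rplus/0]_(i | P i) (c * F i) = c * \big[Rplus/0]_(i | P i) F i.
Proof. elim/big_rec2: _ => [|i x y Pi ->]; lra. Qed.

Lemma sum_single (F : T -> R) j : (forall i, 0 <= F i) ->
  F j <= \big[Rplus/0]_(i : T) F i.
Proof.
move=> h; rewrite (bigD1 j) //=.
have : 0 <= \big[Rplus/0]_(i | i != j) F i by apply: sum_ge0.
lra.
Qed.

Lemma sum_const (c : R) : \big[Rplus/0]_(i : T) c = INR #|T| * c.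
Proof.
rewrite big_const; elim: #|T| => [|m ih]; rewrite ?[iter _ _ _]/=; first by rewrite /=; lra.
rewrite ih -addn1 plus_INR /=; lra.
Qed.

Lemma rmax_ge (F : T -> R) j : F j <= \big[Rmax/0]_(i : T) F i.
Proof.
rewrite /index_enum; have : j \in index_enum T by rewrite mem_index_enum.
rewrite /index_enum; elim: (Finite.enum T) => [//|a r ih].
rewrite inE big_cons => /orP [/eqP ->|/ih h]; first exact: Rmax_l.
apply: Rle_trans h (Rmax_r _ _).
Qed.

Lemma rmax_le (F : T -> R) c : 0 <= c -> (forall i, F i <= c) ->
  \big[Rmax/0]_(i : T) F i <= c.
Proof.
move=> c0 h; elim/big_rec: _ => [//|i x _ hx]. by apply: Rmax_lub.
Qed.
End Sums.

Lemma count_ord n a b : (a <= b)%N -> (b <= n)%N ->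
  \big[Rplus/0]_(j < n) (if (a <= val j < b)%N then 1 else 0) = INR (b - a).
Proof.
move=> hab hbn.
rewrite -(big_mkord xpredT (fun m => if (a <= m < b)%N then 1 else 0)).
have key : forall N, (N <= n)%N -> \big[Rplus/0]_(0 <= m < N) (if (a <= m < b)%N then 1 else 0)
   = INR (minn N b - minn N a).
  elim=> [|N ih] hN; first by rewrite big_geq // !min0n.
  rewrite big_nat_recr //= ih; last by apply: ltnW.
  have mL : forall x y, (x <= y)%N -> minn x y = x by move=> x y h; apply/minn_idPl.
  have mR : forall x y, (y <= x)%N -> minn x y = y by move=> x y h; apply/minn_idPr.
  case: ifPn => [/andP [h1 h2]|hc].
  - rewrite (mL N.+1 b) ?(mL N b) ?(mR N.+1 a) ?(mR N a); try lia.
    have -> : (N.+1 - a = (N - a) + 1)%N by lia.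
    rewrite plus_INR /=; lra.
  - case: (leqP a N) => haN.
    + have hbN : (b <= N)%N by move: hc; rewrite haN /= -leqNgt.
      rewrite (mR N.+1 b) ?(mR N b) ?(mR N.+1 a) ?(mR N a); try lia. lra.
    + rewrite (mL N.+1 a) ?(mL N a) ?(mL N.+1 b) ?(mL N b); try lia.
      rewrite !subnn /=; lra.
rewrite key //.
by rewrite (minn_idPr hbn) (minn_idPr (leq_trans hab hbn)).
Qed.

Lemma sum_scalr (T : finType) (P : pred T) (c : R) (F : T -> R) :
  \big[Rplus/0]_(i | P i) (F i * c) = (\big[Rplus/0]_(i | P i) F i) * c.
Proof. elim/big_rec2: _ => [|i x y Pi ->]; lra. Qed.

Section Avg.
Variable n : nat.
Local Notation PT := {perm 'I_n}.

Definition permp (u : profile n) (σ : PT) : profile n := fun i => u (σ i).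
Definition cN := / INR #|{perm 'I_n}|.
Definition Jbar (J : mechanism n) : mechanism n :=
  fun u s => cN * \big[Rplus/0]_(σ : PT) J (permp u σ) (σ * s)%g.

Lemma cN_prop : 0 < cN /\ cN * INR #|{perm 'I_n}| = 1.
Proof.
have h : (0 < #|{perm 'I_n}|)%N by apply/card_gt0P; exists 1%g.
have h' : 0 < INR #|{perm 'I_n}| by apply: lt_0_INR; apply/ltP.
rewrite /cN; split; [by apply: Rinv_0_lt_compat | field; lra].
Qed.

Lemma in_Vn_permp u σ : in_Vn u -> in_Vn (permp u σ).
Proof. by move=> h i; apply: h. Qed.

Lemma sum_permL (F : PT -> R) (σ : PT) :
  \big[Rplus/0]_(s : PT) F (σ * s)%g = \big[Rplus/0]_(s : PT) F s.
Proof. by rewrite [RHS](reindex_inj (mulgI σ)). Qed.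

Lemma Jbar_mech J : is_mechanism J -> is_mechanism (Jbar J).
Proof.
move=> hJ u hu; have [c0 c1] := cN_prop; split.
  move=> s; rewrite /Jbar; apply: Rmult_le_pos; first lra.
  by apply: sum_ge0 => σ _; have [h _] := hJ _ (in_Vn_permp σ hu); apply: h.
rewrite /sumR /Jbar.
rewrite (sum_scal _ cN (fun s => \big[Rplus/0]_(σ : PT) J (permp u σ) (σ * s)%g)).
rewrite exchange_big /=.
rewrite (eq_bigr (fun σ => 1)); last first.
  move=> σ _; rewrite (sum_permL (fun s => J (permp u σ) s)).
  by have [_ h] := hJ _ (in_Vn_permp σ hu); apply: h.
by rewrite sum_const Rmult_1_r.
Qed.

Lemma exp_util_Jbar J v i (t : valuation n) :
  exp_util (Jbar J) v i t =
  cN * \big[Rplus/0]_(σ : PT) exp_util J (permp v σ) (σ^-1 i)%g t.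
Proof.
rewrite /exp_util /sumR /Jbar.
rewrite (eq_bigr (fun s => cN * \big[Rplus/0]_(σ : PT) (J (permp v σ) (σ * s)%g * t (s i))));
  last by move=> s _; rewrite Rmult_assoc sum_scalr.
rewrite (sum_scal _ cN) exchange_big /=; congr (_ * _).
apply: eq_bigr => σ _.
rewrite [LHS](reindex_inj (mulgI σ^-1)%g) /=.
by apply: eq_bigr => s _; rewrite mulKVg permM.
Qed.

Lemma permp_update u i w σ :
  permp (update u i w) σ = update (permp u σ) (σ^-1 i)%g w.
Proof.
apply: functional_extensionality => x; rewrite /permp /update.
have -> : (σ x == i) = (x == (σ^-1)%g i).
  apply/eqP/eqP => [<-|->]; by rewrite ?permK ?permKV.
by [].
Qed.

Lemma Jbar_truthful J : truthful_in_expectation J -> truthful_in_expectation (Jbar J).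
Proof.
move=> hJ i u w hu hw; rewrite !exp_util_Jbar.
have [c0 _] := cN_prop; apply: Rmult_le_compat_l; first lra.
apply: sum_le => σ _; rewrite permp_update.
have -> : u i = permp u σ (σ^-1 i)%g by rewrite /permp permKV.
by apply: hJ => //; apply: in_Vn_permp.
Qed.

Lemma welfare_perm u (σ t : PT) : welfare u (σ^-1 * t)%g = welfare (permp u σ) t.
Proof.
rewrite /welfare [LHS](reindex_inj (@perm_inj _ σ)) /=.
by apply: eq_bigr => x _; rewrite permM permK.
Qed.

Lemma exp_welfare_Jbar J u :
  exp_welfare (Jbar J) u = cN * \big[Rplus/0]_(σ : PT) exp_welfare J (permp u σ).
Proof.
rewrite /exp_welfare /sumR /Jbar.
rewrite (eq_bigr (fun s => cN * \big[Rplus/0]_(σ : PT) (J (permp u σ) (σ * s)%g * welfare u s)));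
  last by move=> s _; rewrite Rmult_assoc sum_scalr.
rewrite (sum_scal _ cN) exchange_big /=; congr (_ * _).
apply: eq_bigr => σ _.
rewrite [LHS](reindex_inj (mulgI σ^-1)%g) /=.
by apply: eq_bigr => s _; rewrite mulKVg welfare_perm.
Qed.

Lemma opt_perm u σ : opt_welfare (permp u σ) = opt_welfare u.
Proof.
rewrite /opt_welfare [RHS](reindex_inj (mulgI σ^-1)%g) /=.
by apply: eq_bigr => s _; rewrite welfare_perm.
Qed.

Lemma Jbar_equiv J u (τ s : PT) : Jbar J (permp u τ) (τ * s)%g = Jbar J u s.
Proof.
rewrite /Jbar; congr (_ * _).
have e : forall σ : PT, permp (permp u τ) σ = permp u (σ * τ)%g.
  by move=> σ; apply: functional_extensionality => x; rewrite /permp permM.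
rewrite (eq_bigr (fun σ => J (permp u (σ * τ)%g) ((σ * τ) * s)%g));
  last by move=> σ _; rewrite e mulgA.
by rewrite [RHS](reindex_inj (mulIg τ)).
Qed.

Lemma Jbar_anon J u i j (t : valuation n) : u i = u j ->
  exp_util (Jbar J) u i t = exp_util (Jbar J) u j t.
Proof.
move=> eij; set τ := tperm i j.
have eu : permp u τ = u.
  apply: functional_extensionality => x; rewrite /permp.
  by case: tpermP => [->|->|]; rewrite ?eij.
rewrite /exp_util /sumR [RHS](reindex_inj (mulgI τ)) /=.
apply: eq_bigr => s _.
by rewrite -[X in _ = Jbar J X _ * _]eu Jbar_equiv permM tpermR.
Qed.

End Avg.

Section Gen.
Variable n : nat.

Lemma welfare_ge0 (u : profile n) s : in_Vn u -> 0 <= welfare u s.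
Proof. move=> hu; apply: sum_ge0 => i _; by have [_ [_ [_ h]]] := hu i; have := h (s i); lra. Qed.

Lemma opt_ge (u : profile n) s : welfare u s <= opt_welfare u.
Proof. exact: (rmax_ge (fun s => welfare u s)). Qed.

Lemma opt_pos (u : profile n) : (0 < n)%N -> in_Vn u -> 0 < opt_welfare u.
Proof.
move=> hn hu; set i := Ordinal hn.
have [_ [[j hj] _]] := hu i.
apply: Rlt_le_trans (opt_ge u (tperm i j)); rewrite /welfare.
have hnn : forall x, 0 <= u x (tperm i j x).
  by move=> x; have [_ [_ [_ h]]] := hu x; have := h (tperm i j x); lra.
have hs := @sum_single _ (fun x => u x (tperm i j x)) i hnn.
rewrite /= tpermL hj in hs; apply: Rlt_le_trans hs; lra.
Qed.

Lemma exp_le_opt (J : mechanism n) u : is_mechanism J -> in_Vn u ->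
  exp_welfare J u <= opt_welfare u.
Proof.
move=> hJ hu; have [h0 h1] := hJ u hu.
rewrite /exp_welfare /sumR.
apply: Rle_trans (sum_le (P := xpredT) (G := fun s => J u s * opt_welfare u) _) _.
  by move=> s _; apply: Rmult_le_compat_l; [apply: h0| apply: opt_ge].
rewrite sum_scalr; move: h1; rewrite /sumR => ->; lra.
Qed.

Lemma Jbar_ratio (J : mechanism n) (c : R) u : (0 < n)%N -> is_mechanism J ->
  (forall v, in_Vn v -> c <= ratio J v) -> in_Vn u ->
  c * opt_welfare u <= exp_welfare (Jbar J) u.
Proof.
move=> hn hJ hc hu; rewrite exp_welfare_Jbar.
have [c0 c1] := cN_prop n.
have op := opt_pos hn hu.
have key : forall σ : {perm 'I_n}, c * opt_welfare u <= exp_welfare J (permp u σ).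
  move=> σ; have hv := in_Vn_permp σ hu.
  have := hc _ hv; rewrite /ratio opt_perm => h.
  have e : exp_welfare J (permp u σ) = exp_welfare J (permp u σ) / opt_welfare u * opt_welfare u
    by field; lra.
  rewrite e; apply: Rmult_le_compat_r; lra.
apply: Rle_trans (Rmult_le_compat_l _ _ _ (Rlt_le _ _ c0)
  (sum_le (P := xpredT) (F := fun _ => c * opt_welfare u) (fun σ _ => key σ))).
rewrite sum_const; rewrite -Rmult_assoc c1; lra.
Qed.
End Gen.

Lemma sum_lt (T : finType) (F G : T -> R) j : (forall i, F i <= G i) -> F j < G j ->
  \big[Rplus/0]_(i : T) F i < \big[Rplus/0]_(i : T) G i.
Proof.
move=> h hj; rewrite (bigD1 j) //= [X in _ < X](bigD1 j) //=.
have := sum_le (P := fun i => i != j) (fun i _ => h i). lra.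
Qed.

Lemma sum_reindex_perm n (f : 'I_n -> R) (s : {perm 'I_n}) :
  \big[Rplus/0]_(i : 'I_n) f (s i) = \big[Rplus/0]_(j : 'I_n) f j.
Proof. by rewrite [RHS](reindex_inj (@perm_inj _ s)). Qed.

Section Constr.
Variables n k : nat.
Hypothesis hk : (16 <= k)%N.
Hypothesis hkn : (k * k <= n)%N.

Lemma hk2n : (2 * k + 2 <= n)%N.
Proof. nia. Qed.

Definition ind a b (j : 'I_n) : R := if (a <= j < b)%N then 1 else 0.
Definition e (j : 'I_n) : R := INR j / (INR n * INR n).
Definition y : R := / INR k.
Definition valN (g : nat) : valuation n := fun j => if (j : nat) == g then 1 else e j.
Definition valF : valuation n :=
  fun j => if (j : nat) == k.+1 then 1 else if (1 <= j < k.+1)%N then y + e j else e j.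
Definition needy (m : nat) : bool := (1 <= m < (2 * k).+1)%N.
Definition gnat (m : nat) : nat := if (m <= k)%N then m else (m - k)%N.
Definition P2 : profile n := fun i => if needy i then valN (gnat i) else valF.

Lemma INRn_pos : 0 < INR n.
Proof. apply: lt_0_INR; apply/ltP; have := hk2n; lia. Qed.

Lemma INRk_ge : 16 <= INR k.
Proof. have -> : 16 = INR 16 by rewrite /=; lra. apply: le_INR; apply/leP; lia. Qed.

Lemma k_le_n : INR k <= INR n.
Proof. apply: le_INR; apply/leP; have := hk2n; lia. Qed.

Lemma e_bound j : 0 <= e j < / INR n.
Proof.
have hn := INRn_pos; rewrite /e.
have hj : INR j < INR n by apply: lt_INR; apply/ltP; exact: ltn_ord.
have h0 := pos_INR j.
split; first by apply: Rmult_le_pos; [lra| apply: Rlt_le; apply: Rinv_0_lt_compat; nra].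
apply: (Rmult_lt_reg_r (INR n * INR n)); first nra.
rewrite /Rdiv Rmult_assoc Rinv_l; last nra.
have -> : / INR n * (INR n * INR n) = INR n by field; lra.
lra.
Qed.

Lemma e_inj x z : e x = e z -> x = z.
Proof.
have hn := INRn_pos; rewrite /e => h.
have : INR x = INR z.
  have := f_equal (fun t => t * (INR n * INR n)) h; rewrite /Rdiv !Rmult_assoc Rinv_l; nra.
by move/INR_eq => /val_inj.
Qed.

Lemma y_facts : / INR n <= y /\ y <= / 16 /\ 0 < y.
Proof.
have h1 := INRk_ge; have h2 := k_le_n; rewrite /y.
split; first by apply: Rinv_le_contravar; lra.
split; first by apply: Rinv_le_contravar; lra.
apply: Rinv_0_lt_compat; lra.
Qed.

Lemma invn_small : / INR n <= / 256.
Proof.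
apply: Rinv_le_contravar; first lra.
have -> : 256 = INR 256 by rewrite /=; lra. apply: le_INR; apply/leP; nia.
Qed.

Lemma valN_ur g : (1 <= g < n)%N -> unit_range (valN g).
Proof.
move=> /andP [g1 gn]; have hn : (0 < n)%N by lia.
have eb := e_bound; have inv := invn_small.
split; [|split; [|split]].
- move=> x z; rewrite /valN.
  case: eqP => hx; case: eqP => hz.
  + by move=> _; apply: ord_inj; rewrite hx hz.
  + have := eb z; lra.
  + have := eb x; lra.
  + exact: e_inj.
- by exists (Ordinal gn); rewrite /valN /= eqxx.
- exists (Ordinal hn); rewrite /valN /=.
  have -> : (0%N == g) = false by apply/eqP; lia.
  by rewrite /e /=; lra.
- move=> j; rewrite /valN; case: eqP => _; first lra. have := eb j; lra.
Qed.

Lemma valF_ur : unit_range valF.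
Proof.
have hn : (0 < n)%N by have := hk2n; lia.
have hzn : (k.+1 < n)%N by have := hk2n; lia.
have eb := e_bound; have inv := invn_small; have [y1 [y2 y3]] := y_facts.
split; [|split; [|split]].
- move=> x z; rewrite /valF.
  have ex := eb x; have ez := eb z.
  case: eqP => hx; case: eqP => hz.
  + by move=> _; apply: ord_inj; rewrite hx hz.
  + case: ifP => _; lra.
  + case: ifP => _; lra.
  + case: ifP => _; case: ifP => _ h.
    * by apply: e_inj; lra.
    * lra.
    * lra.
    * exact: e_inj.
- by exists (Ordinal hzn); rewrite /valF /= eqxx.
- exists (Ordinal hn); rewrite /valF /=.
  by rewrite /e /=; lra.
- move=> j; rewrite /valF; have := eb j.
  case: eqP => _; first lra. case: ifP => _; lra.
Qed.

Lemma gnat_range (m : nat) : needy m -> (1 <= gnat m < k.+1)%N.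
Proof. rewrite /needy /gnat => /andP [h1 h2]; case: ifP => h; apply/andP; split; lia. Qed.

Lemma P2_Vn : in_Vn P2.
Proof.
move=> i; rewrite /P2; case: ifP => hi; last exact: valF_ur.
apply: valN_ur; have := gnat_range hi; have := hk2n; lia.
Qed.


Definition B (j : 'I_n) : R := ind k.+1 k.+2 j + y * ind 1 k.+1 j + / INR n.

Lemma ind_ge0 a b j : 0 <= ind a b j.
Proof. rewrite /ind; case: ifP => _; lra. Qed.

Lemma sumB : \big[Rplus/0]_(j : 'I_n) B j = 3.
Proof.
have h2 := hk2n; have hn := INRn_pos.
rewrite /B !big_split /= sum_scal !count_ord; try lia.
rewrite sum_const card_ord.
have -> : (k.+2 - k.+1 = 1)%N by lia.
have -> : (k.+1 - 1 = k)%N by lia.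
rewrite /y /=. have := INRk_ge => hk'. field; lra.
Qed.

Lemma valF_ge0 j : 0 <= valF j.
Proof. have [_ [_ [_ h]]] := valF_ur; have := h j; lra. Qed.

Lemma valF_bound j : valF j <= B j.
Proof.
have eb := e_bound j; have [y1 [y2 y3]] := y_facts.
have i1 := ind_ge0 k.+1 k.+2 j; have i2 := ind_ge0 1 k.+1 j.
rewrite /valF /B; case: eqP => hx.
  have -> : ind k.+1 k.+2 j = 1 by rewrite /ind hx leqnn ltnSn.
  nra.
case: ifP => hg.
  have -> : ind 1 k.+1 j = 1 by rewrite /ind hg.
  nra.
nra.
Qed.

Definition hit (o : 'I_n) (s : {perm 'I_n}) : R :=
  if needy o then (if (s o : nat) == gnat o then 1 else 0) else 0.

Lemma hit_ge0 o s : 0 <= hit o s.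
Proof. rewrite /hit; case: ifP => _; try case: ifP => _; lra. Qed.

Lemma P2_bound i (j : 'I_n) (s : {perm 'I_n}) : s i = j -> P2 i j <= hit i s + B j.
Proof.
move=> hs; have eb := e_bound j; have [y1 [y2 y3]] := y_facts.
have i1 := ind_ge0 k.+1 k.+2 j; have i2 := ind_ge0 1 k.+1 j.
have hb := valF_bound j.
rewrite /P2 /hit hs; case: ifP => hn.
  rewrite /valN /B; case: eqP => _; nra.
lra.
Qed.

Lemma welfare_P2 s : welfare P2 s <= \big[Rplus/0]_(i : 'I_n) hit i s + 3.
Proof.
rewrite /welfare -sumB -(sum_reindex_perm B s) -big_split /=.
by apply: sum_le => i _; apply: P2_bound.
Qed.

Lemma opt_P2 : INR k <= opt_welfare P2.
Proof.
apply: Rle_trans (opt_ge P2 1%g); rewrite /welfare.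
have h2 := hk2n.
have hc : \big[Rplus/0]_(j < n) ind 1 k.+1 j = INR k.
  rewrite /ind count_ord; [congr INR; lia | lia | lia].
rewrite -hc.
apply: sum_le => i _; rewrite perm1 /ind /P2.
case: ifP => hi; last by have [_ [_ [_ h]]] := P2_Vn i; have := h i; rewrite /P2; lra.
have hn : needy i by rewrite /needy; move: hi => /andP [a b]; apply/andP; split; lia.
rewrite hn /gnat /valN.
have -> : (i <= k)%N by move: hi => /andP [a b]; lia.
by rewrite eqxx; lra.
Qed.

Section Main.
Variable J : mechanism n.
Hypothesis hJ : is_mechanism J.
Hypothesis hT : truthful_in_expectation J.
Variable Rr : R.
Hypothesis hR0 : 0 <= Rr.
Hypothesis hR : forall v, in_Vn v -> Rr <= ratio J v.

Let Jb := Jbar J.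
Definition a (i : 'I_n) : R := \big[Rplus/0]_(s : {perm 'I_n}) (Jb P2 s * hit i s).

Lemma Jb_mech : is_mechanism Jb. Proof. exact: Jbar_mech. Qed.

Lemma expW_bound : exp_welfare Jb P2 <= \big[Rplus/0]_(i : 'I_n) a i + 3.
Proof.
have [h0 h1] := Jb_mech P2_Vn.
rewrite /exp_welfare /sumR.
apply: Rle_trans (sum_le (P := xpredT)
   (G := fun s => Jb P2 s * (\big[Rplus/0]_(i : 'I_n) hit i s + 3)) _) _.
  by move=> s _; apply: Rmult_le_compat_l; [apply: h0| apply: welfare_P2].
rewrite (eq_bigr (fun s => \big[Rplus/0]_(i : 'I_n) (Jb P2 s * hit i s) + Jb P2 s * 3));
  last by move=> s _; rewrite Rmult_plus_distr_l sum_scal.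
rewrite big_split /= exchange_big /= (@sum_scalr _ _ 3 _).
move: h1; rewrite /sumR => ->; rewrite /a Rmult_1_l; exact: Rle_refl.
Qed.

Lemma a_nonneedy (i : 'I_n) : ~~ needy i -> a i = 0.
Proof.
move=> hi; rewrite /a big1 // => s _; rewrite /hit (negbTE hi); lra.
Qed.

Lemma a_ge0 i : 0 <= a i.
Proof.
have [h0 _] := Jb_mech P2_Vn.
apply: sum_ge0 => s _; apply: Rmult_le_pos; [apply: h0| apply: hit_ge0].
Qed.

Lemma pigeon : exists o : 'I_n, needy o /\
  (\big[Rplus/0]_(i : 'I_n) a i) / (2 * INR k) <= a o.
Proof.
set S := \big[Rplus/0]_(i : 'I_n) a i.
apply: NNPP => hno.
have hall : forall o : 'I_n, needy o -> a o < S / (2 * INR k).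
  move=> o ho; apply: Rnot_le_lt => h; apply: hno; by exists o.
have h1n : (1 < n)%N by have := hk2n; lia.
set o1 := Ordinal h1n.
have hk' := INRk_ge.
have hlt : S < \big[Rplus/0]_(i : 'I_n) (ind 1 (2 * k).+1 i * (S / (2 * INR k))).
  apply: (@sum_lt _ a _ o1).
    move=> i; rewrite /ind; case: ifP => hi.
      have := hall i hi; lra.
    rewrite a_nonneedy; [lra| by rewrite /needy hi].
  have hn1 : needy o1 by rewrite /needy /=; lia.
  have := hall o1 hn1; rewrite /ind; case: ifP => h; first lra.
  by move: hn1; rewrite /needy h.
move: hlt; rewrite sum_scalr count_ord; try (have := hk2n; lia).
have -> : ((2 * k).+1 - 1 = 2 * k)%N by lia.
have e : INR (2 * k) * (S / (2 * INR k)) = S.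
  rewrite mult_INR /=; field; lra.
rewrite e; lra.
Qed.


Lemma main_ineq :
  Rr * INR k - 3 <= 6 * (INR k * INR k) / (INR n - 2 * INR k + 1).
Proof.
have h2 := hk2n; have hk' := INRk_ge.
have hn0 : (0 < n)%N by lia.
have [o [ho hao]] := pigeon.
set S := \big[Rplus/0]_(i : 'I_n) a i in hao.
have hW : Rr * INR k <= S + 3.
  have h1 := Jbar_ratio hn0 hJ hR P2_Vn.
  have h3 := expW_bound.
  have h4 := opt_P2.
  have : Rr * INR k <= Rr * opt_welfare P2 by apply: Rmult_le_compat_l.
  rewrite /S; rewrite /Jb in h3; lra.
set Q := update P2 o valF.
have hQ : in_Vn Q.
  by move=> i; rewrite /Q /update; case: ifP => _; [exact: valF_ur| exact: P2_Vn].
have hQo : Q o = valF by rewrite /Q /update eqxx.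
have ht := Jbar_truthful hT o hQ (P2_Vn o).
have eQ : update Q o (P2 o) = P2.
  apply: functional_extensionality => x; rewrite /Q /update.
  by case: eqP => [->|].
rewrite eQ hQo in ht.
set U := exp_util (Jbar J) Q o valF in ht.
have [y1 [y2 y3]] := y_facts.
have hy : y * a o <= exp_util (Jbar J) P2 o valF.
  have [h0 _] := Jb_mech P2_Vn.
  rewrite /a /exp_util /sumR -sum_scal.
  apply: sum_le => s _.
  have hv : y * hit o s <= valF (s o).
    rewrite /hit ho; case: eqP => hs.
      have := gnat_range ho; rewrite -hs => hr.
      rewrite /valF.
      have -> : ((s o : nat) == k.+1) = false by apply/eqP; move: hr => /andP [_ b]; lia.
      rewrite hr; have := e_bound (s o); lra.
    have := valF_ge0 (s o); lra.
  have := h0 s; rewrite /Jb => h0s. nra.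
set isF := fun i : 'I_n => 1 + (-1) * ind 1 (2 * k).+1 i + (if i == o then 1 else 0).
have isF01 : forall i, isF i = 0 \/ (isF i = 1 /\ Q i = valF).
  move=> i; rewrite /isF /ind /Q /update.
  case: eqP => [->|hio].
    have ho' := ho; rewrite /needy in ho'.
    by right; split; [rewrite ho'; lra | ].
  case: ifP => hi.
    by left; lra.
  right; split; first lra.
  by rewrite /P2 /needy hi.
have sumF : \big[Rplus/0]_(i : 'I_n) isF i = INR n - 2 * INR k + 1.
  rewrite /isF !big_split /= sum_scal count_ord; try lia.
  rewrite sum_const card_ord (bigD1 o) //= eqxx big1; last first.
    by move=> i /negbTE ->.
  have -> : ((2 * k).+1 - 1 = 2 * k)%N by lia.
  rewrite mult_INR /=; lra.
have hsum : \big[Rplus/0]_(i : 'I_n) (isF i * exp_util (Jbar J) Q i valF) <= 3.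
  have [h0 h1] := Jb_mech hQ.
  rewrite /exp_util /sumR.
  rewrite (eq_bigr (fun i => \big[Rplus/0]_(s : {perm 'I_n}) (isF i * (Jbar J Q s * valF (s i)))));
    last by move=> i _; rewrite sum_scal.
  rewrite exchange_big /=.
  apply: Rle_trans (sum_le (P := xpredT) (G := fun s => Jbar J Q s * 3) _) _.
    move=> s _.
    rewrite (eq_bigr (fun i => Jbar J Q s * (isF i * valF (s i))));
      last by move=> i _; ring.
    rewrite sum_scal; apply: Rmult_le_compat_l; first by apply: h0.
    rewrite -sumB -(sum_reindex_perm B s).
    apply: sum_le => i _.
    have := valF_bound (s i); have := valF_ge0 (s i).
    by case: (isF01 i) => [->| [-> _]]; lra.
  rewrite sum_scalr; move: h1; rewrite /sumR => ->; lra.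
have eanon : \big[Rplus/0]_(i : 'I_n) (isF i * exp_util (Jbar J) Q i valF)
   = \big[Rplus/0]_(i : 'I_n) (isF i * U).
  apply: eq_bigr => i _.
  case: (isF01 i) => [->| [-> hq]]; first lra.
  congr (_ * _); rewrite /U; apply: Jbar_anon; by rewrite hq hQo.
rewrite eanon sum_scalr sumF in hsum.
have hD : 0 < INR n - 2 * INR k + 1.
  have : INR (2 * k + 2) <= INR n by apply: le_INR; apply/leP.
  rewrite plus_INR mult_INR /=; lra.
have hU : U <= 3 / (INR n - 2 * INR k + 1).
  apply: (Rmult_le_reg_l (INR n - 2 * INR k + 1)) => //.
  have -> : (INR n - 2 * INR k + 1) * (3 / (INR n - 2 * INR k + 1)) = 3 by field; lra.
  lra.
have hao' : a o <= INR k * U.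
  have : a o = INR k * (y * a o) by rewrite /y; field; lra.
  move=> ->; apply: Rmult_le_compat_l; lra.
have hS : S <= 2 * INR k * a o.
  have : S = 2 * INR k * (S / (2 * INR k)) by field; lra.
  move=> ->; apply: Rmult_le_compat_l; lra.
have : S <= 2 * INR k * (INR k * (3 / (INR n - 2 * INR k + 1))).
  apply: Rle_trans hS _; apply: Rmult_le_compat_l; first lra.
  apply: Rle_trans hao' _; apply: Rmult_le_compat_l; lra.
have -> : 2 * INR k * (INR k * (3 / (INR n - 2 * INR k + 1)))
  = 6 * (INR k * INR k) / (INR n - 2 * INR k + 1) by field; lra.
lra.
Qed.

End Main.
End Constr.

Lemma small_profile n : (2 <= n)%N -> exists u : profile n, in_Vn u.
Proof.
move=> hn.
have hn1 : 0 < INR (n - 1) by apply: lt_0_INR; apply/ltP; lia.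
exists (fun _ (j : 'I_n) => INR j / INR (n - 1)) => i.
split; [|split; [|split]].
- move=> x z /= h; apply: ord_inj; apply: INR_eq.
  have := f_equal (fun t => t * INR (n - 1)) h; rewrite /Rdiv !Rmult_assoc Rinv_l; last lra.
  by rewrite !Rmult_1_r.
- have hlt : (n - 1 < n)%N by lia.
  exists (Ordinal hlt); rewrite /=; field; lra.
- have hlt : (0 < n)%N by lia.
  exists (Ordinal hlt); rewrite /=; lra.
- move=> j /=; have h0 := pos_INR j.
  have hj : INR j <= INR (n - 1) by apply: le_INR; apply/leP; have := ltn_ord j; lia.
  split; first by apply: Rmult_le_pos; [lra| apply: Rlt_le; apply: Rinv_0_lt_compat].
  apply: (Rmult_le_reg_r (INR (n - 1))) => //.
  rewrite /Rdiv Rmult_assoc Rinv_l; lra.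
Qed.

Lemma part2 (n : nat) : (2 <= n)%N ->
  forall J : mechanism n, is_mechanism J -> truthful_in_expectation J ->
    ar_le J (16 / sqrt (INR n)).
Proof.
move=> hn J hJ hT eps heps.
have [hs1 hs2] := Nat.sqrt_spec n (Nat.le_0_l n).
set k := Nat.sqrt n in hs1 hs2.
have hnpos : 0 < INR n by apply: lt_0_INR; apply/ltP; lia.
have sqp : 0 < sqrt (INR n) by apply: sqrt_lt_R0.
set Rr := 16 / sqrt (INR n).
have hR0 : 0 < Rr by rewrite /Rr; apply: Rdiv_lt_0_compat; lra.
case: (leqP 16 k) => hk.
- apply: NNPP => hno.
  have hR : forall v, in_Vn v -> Rr <= ratio J v.
    move=> v hv; apply: Rnot_lt_le => hlt; apply: hno; exists v; split => //; lra.
  have hkn : (k * k <= n)%N by apply/leP.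
  have := main_ineq hk hkn hJ hT (Rlt_le _ _ hR0) hR.
  set K := INR k.
  have hK : 16 <= K.
    have -> : 16 = INR 16 by rewrite /=; lra.
    by apply: le_INR; apply/leP.
  have hnK : K * K <= INR n by rewrite /K -mult_INR; apply: le_INR.
  have hsK : sqrt (INR n) < K + 1.
    rewrite -(sqrt_square (K + 1)); last lra.
    apply: sqrt_lt_1_alt; split; first lra.
    have : INR n < INR (S k * S k) by apply: lt_INR.
    by rewrite mult_INR S_INR.
  have hRK : Rr * (K + 1) > 16.
    have e : Rr * sqrt (INR n) = 16 by rewrite /Rr; field; lra.
    have : Rr * sqrt (INR n) < Rr * (K + 1) by apply: Rmult_lt_compat_l.
    lra.
  set D := INR n - 2 * K + 1.
  have hD : (K - 1) * (K - 1) <= D by rewrite /D; nra.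
  have hD0 : 0 < D by nra.
  move=> h.
  set t := Rr * K - 3 in h.
  have ht : t * (K + 1) > 13 * K - 3 by rewrite /t; nra.
  have ht0 : t > 0 by nra.
  have h' : t * D <= 6 * (K * K).
    have := Rmult_le_compat_r D _ _ (Rlt_le _ _ hD0) h.
    have -> : 6 * (K * K) / D * D = 6 * (K * K) by field; lra.
    by [].
  have h3 : t * ((K - 1) * (K - 1)) <= 6 * (K * K).
    apply: Rle_trans h'; apply: Rmult_le_compat_l; lra.
  have h4 : (13 * K - 3) * ((K - 1) * (K - 1)) <= 6 * (K * K) * (K + 1).
    apply: Rle_trans (_ : t * (K + 1) * ((K - 1) * (K - 1)) <= _).
      apply: Rmult_le_compat_r; nra.
    have := Rmult_le_compat_r (K + 1) _ _ (ltac:(lra)) h3; nra.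
  nra.
- have [u hu] := small_profile hn.
  exists u; split => //.
  have hop := opt_pos (ltac:(lia) : (0 < n)%N) hu.
  have hle := exp_le_opt hJ hu.
  have hr1 : ratio J u <= 1.
    rewrite /ratio; apply: (Rmult_le_reg_r (opt_welfare u)) => //.
    rewrite /Rdiv Rmult_assoc Rinv_l; lra.
  have hsq : sqrt (INR n) <= 16.
    rewrite -(sqrt_square 16); last lra.
    apply: sqrt_le_1_alt.
    have : INR n <= INR 256 by apply: le_INR; apply/leP; nia.
    by rewrite /=; lra.
  have : 1 <= Rr.
    rewrite /Rr; apply: (Rmult_le_reg_r (sqrt (INR n))) => //.
    rewrite /Rdiv Rmult_assoc Rinv_l; lra.
  lra.
Qed.

Theorem lemma6 :
  (exists C : R, 0 < C /\
     forall (n : nat), (2 <= n)%N ->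
       forall J : mechanism n, is_mechanism J -> truthful_in_expectation J ->
         ar_le J (C / sqrt (INR n))) /\
  (forall (n : nat), (2 <= n)%N ->
     forall J : mechanism n, is_mechanism J -> truthful_in_expectation J ->
       ar_le J (16 / sqrt (INR n))).
Proof.
split; last exact: part2.
exists 16; split; [lra| exact: part2].
Qed.
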